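(* Let $\mathcal{X},\mathcal{Y}$ be stationary finite Markov chains, $C:{\bm X}\times{\bm Y}\to\mathbb{R}_+$ a cost function, and $p$ a probability distribution on $\mathbb{N}$ with $p(t)>0$ for all $t\in\mathbb{N}$. Then $d_{\mathrm{OTC}}(\mathcal{X},\mathcal{Y};C)=0$ if and only if $d^{p}_{\mathrm{OTM}}(\mathcal{X},\mathcal{Y};C)=0$.
   Context: A finite Markov chain $\mathcal{X}=({\bm X},m^{\bm X}_\bullet,\nu^{\bm X})$ consists of a finite set ${\bm X}$, a transition kernel $m^{\bm X}_\bullet:{\bm X}\to\mathcal{P}({\bm X})$ and an initial distribution $\nu^{\bm X}$; it is stationary if $\nu^{\bm X}$ is stationary for $m^{\bm X}_\bullet$. $\mathcal{C}(\alpha,\beta)$ denotes the set of couplings of $\alpha,\beta$. A Markovian coupling between $\mathcal{X}$ and $\mathcal{Y}$ is a (possibly time-inhomogeneous) Markov chain $(X_t,Y_t)_{t\in\mathbb{N}}$ on ${\bm X}\times{\bm Y}$ with $\mathrm{law}(X_0,Y_0)\in\mathcal{C}(\nu^{\bm X},\nu^{\bm Y})$ and, for all $t,x,y$, the conditional law of $(X_{t+1},Y_{t+1})$ given $(X_t,Y_t)=(x,y)$ in $\mathcal{C}(m^{\bm X}_x,m^{\bm Y}_y)$; it is time homogeneous if these conditional laws do not depend on $t$. For $p\in\mathcal{P}(\mathbb{N})$ and $T\sim p$, $d^{p}_{\mathrm{OTM}}(\mathcal{X},\mathcal{Y};C)=\inf\mathbb{E}\,C(X_T,Y_T)$ over all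 Markovian couplings independent of $T$. $d_{\mathrm{OTC}}(\mathcal{X},\mathcal{Y};C)=\inf\mathbb{E}\,C(X_0,Y_0)$ over all time homogeneous Markovian couplings whose initial distribution is stationary for the coupled chain. *)

(* Defs.v *)
From HB Require Import structures.
From mathcomp Require Import all_boot all_order all_algebra.
From mathcomp Require Import all_classical all_reals all_analysis.
Set Implicit Arguments. Unset Strict Implicit. Unset Printing Implicit Defensive.
Import Order.TTheory GRing.Theory Num.Theory.
Local Open Scope ring_scope.
Local Open Scope classical_set_scope.

Section Defs.
Variable R : realType.

Definition is_dist (T : finType) (mu : T -> R) : Prop :=
  (forall x, 0 <= mu x) /\ \sum_x mu x = 1.

Definition is_kernel (T : finType) (m : T -> T -> R) : Prop :=
  forall x, is_dist (m x).

Definition markov_chain (T : finType) (m : T -> T -> R) (nu : T -> R) : Prop :=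
  is_kernel m /\ is_dist nu.

Definition is_stationary (T : finType) (m : T -> T -> R) (nu : T -> R) : Prop :=
  forall y, \sum_x nu x * m x y = nu y.

Definition is_coupling (X Y : finType) (alpha : X -> R) (beta : Y -> R)
  (g : X * Y -> R) : Prop :=
  is_dist g /\
  (forall x, \sum_y g (x, y) = alpha x) /\
  (forall y, \sum_x g (x, y) = beta y).

(* a (possibly time-inhomogeneous) Markovian coupling, described by its
   initial law g0 and its time-t transition kernels K t *)
Definition markovian_coupling (X Y : finType)
  (mX : X -> X -> R) (nuX : X -> R) (mY : Y -> Y -> R) (nuY : Y -> R)
  (g0 : X * Y -> R) (K : nat -> X * Y -> X * Y -> R) : Prop :=
  is_coupling nuX nuY g0 /\
  forall t x y, is_coupling (mX x) (mY y) (K t (x, y)).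

Fixpoint coupling_law (X Y : finType) (g0 : X * Y -> R)
  (K : nat -> X * Y -> X * Y -> R) (t : nat) : X * Y -> R :=
  match t with
  | 0 => g0
  | t'.+1 => fun z => \sum_w coupling_law g0 K t' w * K t' w z
  end.

(* E C(X_T, Y_T), T ~ p independent of the coupling (extended-real series) *)
Definition otm_cost (X Y : finType) (C : X -> Y -> R) (p : nat -> R)
  (g0 : X * Y -> R) (K : nat -> X * Y -> X * Y -> R) : \bar R :=
  (\sum_(0 <= t <oo) (p t * \sum_z coupling_law g0 K t z * C z.1 z.2)%:E)%E.

Definition d_OTM (X Y : finType)
  (mX : X -> X -> R) (nuX : X -> R) (mY : Y -> Y -> R) (nuY : Y -> R)
  (C : X -> Y -> R) (p : nat -> R) : \bar R :=
  ereal_inf [set c | exists g0 K, markovian_coupling mX nuX mY nuY g0 K /\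
                                  c = otm_cost C p g0 K].

Definition d_OTC (X Y : finType)
  (mX : X -> X -> R) (nuX : X -> R) (mY : Y -> Y -> R) (nuY : Y -> R)
  (C : X -> Y -> R) : \bar R :=
  ereal_inf [set c | exists (g0 : X * Y -> R) (K : X * Y -> X * Y -> R),
     markovian_coupling mX nuX mY nuY g0 (fun _ => K) /\
     is_stationary K g0 /\
     c = ((\sum_z g0 z * C z.1 z.2)%:E)%E].

End Defs.

(* Main.v *)
Require Import Defs.
From HB Require Import structures.
From mathcomp Require Import all_boot all_order all_algebra.
From mathcomp Require Import all_classical all_reals all_analysis.
From mathcomp Require Import lra.
Import Order.TTheory GRing.Theory Num.Theory.
Local Open Scope ring_scope.

Section Main.
Import numFieldNormedType.Exports.
Variable R : realType.
Variables X Y : finType.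
Variables (mX : X -> X -> R) (nuX : X -> R) (mY : Y -> Y -> R) (nuY : Y -> R).
Variables (C : X -> Y -> R) (p : nat -> R).
Hypothesis hX : markov_chain mX nuX.
Hypothesis sX : is_stationary mX nuX.
Hypothesis hY : markov_chain mY nuY.
Hypothesis sY : is_stationary mY nuY.
Hypothesis C0 : forall x y, 0 <= C x y.
Hypothesis p0 : forall t, 0 < p t.
Hypothesis p1 : (\sum_(0 <= t <oo) (p t)%:E)%E = 1%E.

Lemma sum_pair (A B : finType) (F : A * B -> R) :
  \sum_w F w = \sum_a \sum_b F (a, b).
Proof. by rewrite pair_bigA; apply: eq_bigr => -[]. Qed.

Lemma dist_le1 (T : finType) (mu : T -> R) x : is_dist mu -> mu x <= 1.
Proof.
move=> [m0 m1]; rewrite -m1 (bigD1 x) //= lerDl; exact: sumr_ge0.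
Qed.

Lemma law_dist g0 K : markovian_coupling mX nuX mY nuY g0 K ->
  forall t, is_dist (coupling_law g0 K t).
Proof.
move=> [[g0d _] hK]; elim=> [//|t [l0 l1]] /=; split.
  move=> z; apply: sumr_ge0 => w _; apply: mulr_ge0 => //.
  by case: w => x y; case: (hK t x y) => [[]].
rewrite exchange_big /= -[RHS]l1; apply: eq_bigr => w _.
rewrite -mulr_sumr; case: w => x y; case: (hK t x y) => [[_ ->] _].
by rewrite mulr1.
Qed.

Lemma law_margX g0 K : markovian_coupling mX nuX mY nuY g0 K ->
  forall t x, \sum_y coupling_law g0 K t (x, y) = nuX x.
Proof.
move=> hc; have [[_ [g0X _]] hK] := hc; elim=> [//|t IH] x' /=.
rewrite exchange_big /=.
transitivity (\sum_(w : X * Y) coupling_law g0 K t w * mX w.1 x').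
  apply: eq_bigr => w _; rewrite -mulr_sumr; case: w => x y.
  by case: (hK t x y) => [_ [-> _]].
rewrite sum_pair /=.
rewrite -[RHS]sX; apply: eq_bigr => x _; by rewrite -mulr_suml IH.
Qed.

Lemma law_margY g0 K : markovian_coupling mX nuX mY nuY g0 K ->
  forall t y, \sum_x coupling_law g0 K t (x, y) = nuY y.
Proof.
move=> hc; have [[_ [_ g0Y]] hK] := hc; elim=> [//|t IH] y' /=.
rewrite exchange_big /=.
transitivity (\sum_(w : X * Y) coupling_law g0 K t w * mY w.2 y').
  apply: eq_bigr => w _; rewrite -mulr_sumr; case: w => x y.
  by case: (hK t x y) => [_ [_ ->]].
rewrite sum_pair /=.
rewrite exchange_big /=.
rewrite -[RHS]sY; apply: eq_bigr => y _; by rewrite -mulr_suml IH.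
Qed.


Lemma inf0P (S : set (\bar R)) : (forall y, S y -> (0 <= y)%E) ->
  ereal_inf S = 0%E <-> (forall e : R, 0 < e -> exists2 y, S y & (y <= e%:E)%E).
Proof.
move=> S0; split.
  move=> h e e0; have : (ereal_inf S < e%:E)%E by rewrite h lte_fin.
  by case/ereal_inf_lt => y Sy ye; exists y => //; exact: ltW.
move=> h; apply/eqP; rewrite eq_le; apply/andP; split; last first.
  exact: le_ereal_inf_tmp.
have ge0 : (0 <= ereal_inf S)%E by exact: le_ereal_inf_tmp.
case E: (ereal_inf S) => [r| |].
- rewrite lee_fin; apply/negP => /negP; rewrite -ltNge => r0.
  have [y Sy ye] := h (r / 2) (divr_gt0 r0 (ltr0Sn _ _)).
  have := ereal_inf_lbound Sy; rewrite E => ry.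
  have := le_trans ry ye; rewrite lee_fin => rr.
  have : r / 2 < r by rewrite ltr_pdivrMr // ltr_pMr // ltr1n.
  by rewrite ltNge rr.
- have [y Sy ye] := h 1 ltr01.
  have := ereal_inf_lbound Sy; rewrite E => yy.
  by have := le_trans yy ye.
- by rewrite E in ge0.
Qed.

Lemma otm_ge0 g0 K : markovian_coupling mX nuX mY nuY g0 K ->
  (0 <= otm_cost C p g0 K)%E.
Proof.
move=> hc; apply: nneseries_ge0 => t _ _; rewrite lee_fin.
apply: mulr_ge0; first exact: ltW.
apply: sumr_ge0 => z _; apply: mulr_ge0 => //; by case: (law_dist _ _ hc t).
Qed.

Lemma law_stat (g0 : X * Y -> R) K : is_stationary K g0 ->
  forall t, coupling_law g0 (fun _ => K) t = g0.
Proof.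
move=> st; elim=> [//|t IH] /=; apply: funext => z; rewrite IH; exact: st.
Qed.

Lemma otc_to_otm : d_OTC mX nuX mY nuY C = 0%E -> d_OTM mX nuX mY nuY C p = 0%E.
Proof.
move=> h; apply/inf0P.
  by move=> y [g0 [K [hc ->]]]; exact: otm_ge0.
move=> e e0.
move: h; rewrite /d_OTC; set S := (X in ereal_inf X) => h.
have S0 : forall y, S y -> (0 <= y)%E.
  move=> y [g0 [K [[[[g00 _] _] _] [_ ->]]]]; rewrite lee_fin.
  by apply: sumr_ge0 => z _; apply: mulr_ge0.
have [H _] := inf0P _ S0.
have [y [g0 [K [hc [st ->]]]] ye] := H h e e0.
exists (otm_cost C p g0 (fun _ => K)); first by exists g0, (fun _ => K).
rewrite /otm_cost.
rewrite (@eq_eseriesr _ _ (fun t => (\sum_z g0 z * C z.1 z.2)%:E * (p t)%:E)%E); last first.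
  by move=> t _; rewrite law_stat // EFinM muleC.
rewrite nneseriesZl; last by move=> t _; rewrite lee_fin ltW.
by rewrite p1 mule1.
Qed.


Local Notation W := ((X * Y) * (X * Y))%type.

Definition mu (pi : W -> R) (z : X * Y) : R := \sum_w pi (z, w).
Definition T1 (pi : W -> R) : R := \sum_(z : X * Y) \sum_(x' : X)
   `| \sum_(y' : Y) pi (z, (x', y')) - mu pi z * mX z.1 x' |.
Definition T2 (pi : W -> R) : R := \sum_(z : X * Y) \sum_(y' : Y)
   `| \sum_(x' : X) pi (z, (x', y')) - mu pi z * mY z.2 y' |.
Definition T3 (pi : W -> R) : R := \sum_(w : X * Y)
   `| \sum_(z : X * Y) pi (z, w) - mu pi w |.
Definition T4 (pi : W -> R) : R := \sum_(x : X) `| \sum_(y : Y) mu pi (x, y) - nuX x |.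
Definition T5 (pi : W -> R) : R := \sum_(y : Y) `| \sum_(x : X) mu pi (x, y) - nuY y |.
Definition T6 (pi : W -> R) : R := \sum_(z : X * Y) mu pi z * C z.1 z.2.
Definition Fp (pi : W -> R) : R := T1 pi + T2 pi + T3 pi + T4 pi + T5 pi + T6 pi.

Lemma approx : d_OTM mX nuX mY nuY C p = 0%E -> forall eta, 0 < eta ->
  exists pi : W -> R, (forall w, 0 <= pi w <= 1) /\ Fp pi <= eta.
Proof.
move=> h eta eta0.
have hN := truncnS_gt (4 / eta).
set N := (Num.Def.trunc (4 / eta)).+1 in hN.
have N0 : (0 < N%:R :> R) by rewrite ltr0Sn.
pose c := \sum_(t < N) (p t)^-1.
have c0 : 0 < c.
  rewrite /c big_ord_recl.
  have : 0 <= \sum_(i < N.-1) (p (bump 0 i))^-1.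
    by apply: sumr_ge0 => i _; rewrite invr_ge0 ltW.
  have := p0 0; rewrite -invr_gt0; lra.
pose eps := eta / 2 / c.
have eps0 : 0 < eps by rewrite /eps !divr_gt0.
move: h; rewrite /d_OTM; set S := (X in ereal_inf X) => h.
have S0 : forall y, S y -> (0 <= y)%E.
  by move=> y [g0 [K [hc ->]]]; exact: otm_ge0.
have [H _] := inf0P _ S0.
have [y [g0 [K [hc ->]]] ye] := H h eps eps0.
set L := coupling_law g0 K.
have Ld := law_dist _ _ hc.
have hK : forall t z, is_coupling (mX z.1) (mY z.2) (K t z).
  by move=> t [x y']; exact: hc.2.
have L0 : forall t z, 0 <= L t z by move=> t z; case: (Ld t).
have K0 : forall t z w, 0 <= K t z w by move=> t z w; case: (hK t z) => [[]].
pose E t := \sum_z L t z * C z.1 z.2.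
have E0 : forall t, 0 <= E t.
  by move=> t; apply: sumr_ge0 => z _; apply: mulr_ge0.
have Et : forall t, p t * E t <= eps.
  move=> t; rewrite -lee_fin; apply: le_trans ye.
  have hs : (\sum_(0 <= i < t.+1) (p i * E i)%:E <= otm_cost C p g0 K)%E.
    apply: (@nneseries_lim_ge R (fun i => (p i * E i)%:E) xpredT 0 t.+1).
    by move=> i _ _; rewrite lee_fin mulr_ge0 // ltW.
  apply: le_trans hs.
  rewrite big_nat_recr //= leeDr //; apply: sume_ge0 => i _.
  by rewrite lee_fin mulr_ge0 // ltW.
pose pi (zw : W) := N%:R^-1 * \sum_(t < N) L t zw.1 * K t zw.1 zw.2.
exists pi; split.
  move=> [z w]; apply/andP; split.
    apply: mulr_ge0; first by rewrite invr_ge0 ltW.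
    by apply: sumr_ge0 => t _; apply: mulr_ge0.
  apply: le_trans (_ : N%:R^-1 * \sum_(t < N) (1 : R) <= 1).
    apply: ler_wpM2l; first by rewrite invr_ge0 ltW.
    apply: ler_sum => t _; apply: mulr_ile1 => //.
      exact: dist_le1 (Ld t).
    by case: (hK t z) => [hd _]; exact: dist_le1 hd.
  by rewrite sumr_const card_ord -[_ *+ _]/(N%:R) mulVf // gt_eqF.
have Ks : forall t z, \sum_w K t z w = 1 by move=> t z; case: (hK t z) => [[_ ->]].
have muE : forall z, mu pi z = N%:R^-1 * \sum_(t < N) L t z.
  move=> z; rewrite /mu /pi /= -mulr_sumr exchange_big /=; congr (_ * _).
  by apply: eq_bigr => t _; rewrite -mulr_sumr Ks mulr1.
have T1_0 : T1 pi = 0.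
  rewrite /T1; apply: big1 => z _; apply: big1 => x' _.
  suff -> : \sum_y' pi (z, (x', y')) = mu pi z * mX z.1 x' by rewrite subrr normr0.
  rewrite muE /pi /= -mulr_sumr exchange_big /= -mulrA mulr_suml; congr (_ * _).
  by apply: eq_bigr => t _; rewrite -mulr_sumr; case: (hK t z) => [_ [-> _]].
have T2_0 : T2 pi = 0.
  rewrite /T2; apply: big1 => z _; apply: big1 => y' _.
  suff -> : \sum_x' pi (z, (x', y')) = mu pi z * mY z.2 y' by rewrite subrr normr0.
  rewrite muE /pi /= -mulr_sumr exchange_big /= -mulrA mulr_suml; congr (_ * _).
  by apply: eq_bigr => t _; rewrite -mulr_sumr; case: (hK t z) => [_ [_ ->]].
have T4_0 : T4 pi = 0.
  rewrite /T4; apply: big1 => x _.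
  suff -> : \sum_y mu pi (x, y) = nuX x by rewrite subrr normr0.
  under eq_bigr do rewrite muE.
  rewrite -mulr_sumr exchange_big /=.
  under eq_bigr do rewrite (law_margX _ _ hc).
  by rewrite sumr_const card_ord -[nuX x *+ N]mulr_natl mulrA mulVf ?mul1r // gt_eqF.
have T5_0 : T5 pi = 0.
  rewrite /T5; apply: big1 => y' _.
  suff -> : \sum_x mu pi (x, y') = nuY y' by rewrite subrr normr0.
  under eq_bigr do rewrite muE.
  rewrite -mulr_sumr exchange_big /=.
  under eq_bigr do rewrite (law_margY _ _ hc).
  by rewrite sumr_const card_ord -[nuY y' *+ N]mulr_natl mulrA mulVf ?mul1r // gt_eqF.
have T3b : T3 pi <= N%:R^-1 * 2.
  rewrite /T3.
  have eqw : forall w, \sum_z pi (z, w) - mu pi w = N%:R^-1 * (L N w - L 0 w).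
    move=> w; rewrite muE /pi /= -mulr_sumr exchange_big /= -mulrBr; congr (_ * _).
    have tel := @telescope_sumr _ 0 N (fun t => L t w) (leq0n N).
    rewrite /= in tel; rewrite -tel big_mkord -sumrB.
    by apply: eq_bigr => t _.
  apply: le_trans (_ : \sum_w N%:R^-1 * (L N w + L 0 w) <= _).
    apply: ler_sum => w _; rewrite eqw normrM [`|N%:R^-1|]ger0_norm; last by rewrite invr_ge0 ltW.
    apply: ler_wpM2l; first by rewrite invr_ge0 ltW.
    by apply: le_trans (ler_normB _ _) _; rewrite !ger0_norm.
  by rewrite -mulr_sumr big_split /= (Ld N).2 (Ld 0).2.
have T6E : T6 pi = N%:R^-1 * \sum_(t < N) E t.
  rewrite /T6 (eq_bigr (fun z => N%:R^-1 * \sum_(t < N) L t z * C z.1 z.2)); last first.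
    by move=> z _; rewrite muE -mulrA mulr_suml.
  by rewrite -mulr_sumr exchange_big.
have T6b : T6 pi <= eta / 2.
  rewrite T6E; apply: le_trans (_ : \sum_(t < N) E t <= _).
    apply: ler_piMl; first exact: sumr_ge0.
    by rewrite invf_le1 // ler1n.
  apply: le_trans (_ : \sum_(t < N) (p t)^-1 * eps <= _).
    by apply: ler_sum => t _; rewrite ler_pdivlMl.
  by rewrite -mulr_suml -/c mulrC /eps divfK // gt_eqF.
have h4 : 4 < N%:R * eta by rewrite -ltr_pdivrMr.
have hinv : N%:R^-1 * N%:R = 1 :> R by rewrite mulVf // gt_eqF.
have hinv0 : 0 <= N%:R^-1 :> R by rewrite invr_ge0 ltW.
rewrite /Fp T1_0 T2_0 T4_0 T5_0.
nra.
Qed.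

Lemma cont_add (T : topologicalType) (f g : T -> R) :
  continuous f -> continuous g -> continuous (fun x => f x + g x).
Proof. by move=> cf cg x; exact: (cvgD (cf x) (cg x)). Qed.
Lemma cont_opp (T : topologicalType) (f : T -> R) :
  continuous f -> continuous (fun x => - f x).
Proof. by move=> cf x; exact: (cvgN (cf x)). Qed.
Lemma cont_mul (T : topologicalType) (f g : T -> R) :
  continuous f -> continuous g -> continuous (fun x => f x * g x).
Proof. by move=> cf cg x; exact: (cvgM (cf x) (cg x)). Qed.
Lemma cont_norm (T : topologicalType) (f : T -> R) :
  continuous f -> continuous (fun x => `|f x|).
Proof. by move=> cf x; exact: (cvg_norm (cf x)). Qed.
Lemma cont_cst (T : topologicalType) (c : R) : continuous (fun _ : T => c).
Proof. exact: cst_continuous. Qed.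
Lemma cont_sum (T : topologicalType) (I : finType) (g : I -> T -> R) :
  (forall i, continuous (g i)) -> continuous (fun x => \sum_i g i x).
Proof.
move=> cg; rewrite unlock /=; elim: (index_enum I) => [|i s IH] /=.
  exact: cont_cst.
exact: cont_add.
Qed.

Local Notation n := #|{: W}|.
Definition piv (v : 'rV[R]_n) : W -> R := fun w => v ord0 (enum_rank w).

Lemma cont_Fp : continuous (fun v => Fp (piv v)).
Proof.
rewrite /Fp /T1 /T2 /T3 /T4 /T5 /T6 /mu /piv.
apply: cont_add; [apply: cont_add; [apply: cont_add; [apply: cont_add; [apply: cont_add|]|]|]|].
- apply: cont_sum => z; apply: cont_sum => x'; apply: cont_norm; apply: cont_add.
    by apply: cont_sum => y'; exact: coord_continuous.
  apply: cont_opp; apply: cont_mul; last exact: cont_cst.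
  by apply: cont_sum => w; exact: coord_continuous.
- apply: cont_sum => z; apply: cont_sum => x'; apply: cont_norm; apply: cont_add.
    by apply: cont_sum => y'; exact: coord_continuous.
  apply: cont_opp; apply: cont_mul; last exact: cont_cst.
  by apply: cont_sum => w; exact: coord_continuous.
- apply: cont_sum => z; apply: cont_norm; apply: cont_add.
    by apply: cont_sum => y'; exact: coord_continuous.
  by apply: cont_opp; apply: cont_sum => w; exact: coord_continuous.
- apply: cont_sum => z; apply: cont_norm; apply: cont_add; last exact: cont_cst.
  by apply: cont_sum => y'; apply: cont_sum => w; exact: coord_continuous.
- apply: cont_sum => z; apply: cont_norm; apply: cont_add; last exact: cont_cst.
  by apply: cont_sum => y'; apply: cont_sum => w; exact: coord_continuous.
- apply: cont_sum => z; apply: cont_mul; last exact: cont_cst.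
  by apply: cont_sum => w; exact: coord_continuous.
Qed.


Lemma sum_norm0 (I : finType) (g : I -> R) :
  \sum_i `|g i| = 0 -> forall i, g i = 0.
Proof.
move=> /psumr_eq0P H i; apply/normr0_eq0; apply: H => // j _.
Qed.

Lemma sum2_norm0 (I J : finType) (g : I -> J -> R) :
  \sum_i \sum_j `|g i j| = 0 -> forall i j, g i j = 0.
Proof.
move=> H i; apply: sum_norm0; apply: (psumr_eq0P _ H) => // k _.
exact: sumr_ge0.
Qed.

Lemma exists_zero : d_OTM mX nuX mY nuY C p = 0%E ->
  exists pi : W -> R, (forall w, 0 <= pi w) /\
    [/\ T1 pi = 0, T2 pi = 0, T3 pi = 0, T4 pi = 0 & T5 pi = 0] /\ T6 pi = 0.
Proof.
move=> h.
pose A := ([set v : 'rV[R]_n | forall i, `[(0:R), 1]%classic (v ord0 i)])%classic.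
have cA : compact A.
  have := @rV_compact R n (fun=> `[(0:R), 1]%classic) (fun=> @segment_compact R 0 1).
  by [].
have A0 : (A !=set0)%classic.
  by exists 0 => i /=; rewrite mxE in_itv /= lexx ler01.
have [v vA vmin] := compact_EVT_min A0 cA (continuous_subspaceT cont_Fp).
set pi := piv v.
have pi0 : forall w, 0 <= pi w.
  by move=> w; have := set_mem vA (enum_rank w); rewrite /= in_itv /= => /andP[].
have small : forall eta, 0 < eta -> Fp pi <= eta.
  move=> eta eta0; have [q [qb qF]] := approx h _ eta0.
  pose u : 'rV[R]_n := \row_i q (enum_val i).
  have uA : u \in A.
    by apply/mem_set => i; rewrite /u mxE /= in_itv /=; exact: qb.
  have qE : piv u = q by apply: funext => w; rewrite /piv mxE enum_rankK.
  by apply: le_trans (vmin u uA) _; rewrite qE.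
have m0 : forall z, 0 <= mu pi z by move=> z; apply: sumr_ge0 => w _.
have t1 : 0 <= T1 pi by apply: sumr_ge0 => z _; apply: sumr_ge0 => x _.
have t2 : 0 <= T2 pi by apply: sumr_ge0 => z _; apply: sumr_ge0 => x _.
have t3 : 0 <= T3 pi by apply: sumr_ge0 => z _.
have t4 : 0 <= T4 pi by apply: sumr_ge0 => z _.
have t5 : 0 <= T5 pi by apply: sumr_ge0 => z _.
have t6 : 0 <= T6 pi by apply: sumr_ge0 => z _; apply: mulr_ge0.
have F0 : Fp pi <= 0.
  rewrite leNgt; apply/negP => hp.
  have := small _ (divr_gt0 hp (ltr0Sn _ 1)); lra.
move: F0; rewrite /Fp => F0.
exists pi; split => //; split; first split.
all: apply/eqP; rewrite eq_le; apply/andP; split => //; lra.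
Qed.

Lemma otm_to_otc : d_OTM mX nuX mY nuY C p = 0%E -> d_OTC mX nuX mY nuY C = 0%E.
Proof.
move=> h.
have [pi [pi0 [[e1 e2 e3 e4 e5] e6]]] := exists_zero h.
have m0 : forall z, 0 <= mu pi z by move=> z; apply: sumr_ge0 => w _.
move: e1 e2 e3 e4 e5; rewrite /T1 /T2 /T3 /T4 /T5 => e1 e2 e3 e4 e5.
have f1 : forall z x', \sum_y' pi (z, (x', y')) = mu pi z * mX z.1 x'.
  by move=> z x'; apply/eqP; rewrite -subr_eq0; apply/eqP; exact: (sum2_norm0 _ _ _ e1 z x').
have f2 : forall z y', \sum_x' pi (z, (x', y')) = mu pi z * mY z.2 y'.
  by move=> z y'; apply/eqP; rewrite -subr_eq0; apply/eqP; exact: (sum2_norm0 _ _ _ e2 z y').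
have f3 : forall w, \sum_z pi (z, w) = mu pi w.
  by move=> w; apply/eqP; rewrite -subr_eq0; apply/eqP; exact: (sum_norm0 _ _ e3 w).
have f4 : forall x, \sum_y mu pi (x, y) = nuX x.
  by move=> x; apply/eqP; rewrite -subr_eq0; apply/eqP; exact: (sum_norm0 _ _ e4 x).
have f5 : forall y, \sum_x mu pi (x, y) = nuY y.
  by move=> y; apply/eqP; rewrite -subr_eq0; apply/eqP; exact: (sum_norm0 _ _ e5 y).
have [[mXd nuXd] [mYd nuYd]] := (hX, hY).
have pile : forall z w, pi (z, w) <= mu pi z.
  move=> z w; rewrite /mu (bigD1 w) //= lerDl; exact: sumr_ge0.
pose K (z w : X * Y) := if mu pi z == 0 then mX z.1 w.1 * mY z.2 w.2
                        else pi (z, w) / mu pi z.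
have Kc : forall z, is_coupling (mX z.1) (mY z.2) (K z).
  move=> z; rewrite /K; case: eqP => mz.
    split; [split|split].
    - by move=> w; apply: mulr_ge0; [case: (mXd z.1) | case: (mYd z.2)].
    - rewrite sum_pair /=.
      under eq_bigr do rewrite -mulr_sumr (mYd z.2).2 mulr1.
      exact: (mXd z.1).2.
    - by move=> x' /=; rewrite -mulr_sumr (mYd z.2).2 mulr1.
    - by move=> y' /=; rewrite -mulr_suml (mXd z.1).2 mul1r.
  have mz' : mu pi z != 0 by apply/eqP.
  split; [split|split].
  - by move=> w; apply: divr_ge0.
  - by rewrite -mulr_suml divff.
  - by move=> x'; rewrite -mulr_suml f1 mulrAC divff // mul1r.
  - by move=> y'; rewrite -mulr_suml f2 mulrAC divff // mul1r.
have S0 : forall y, [set c | exists (g0 : X * Y -> R) (K : X * Y -> X * Y -> R),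
     markovian_coupling mX nuX mY nuY g0 (fun _ => K) /\
     is_stationary K g0 /\
     c = ((\sum_z g0 z * C z.1 z.2)%:E)%E]%classic y -> (0 <= y)%E.
  move=> y [g0 [K' [[[[g00 _] _] _] [_ ->]]]]; rewrite lee_fin.
  by apply: sumr_ge0 => z _; apply: mulr_ge0.
apply/(inf0P _ S0) => e e0.
exists 0%E; last by rewrite lee_fin ltW.
exists (mu pi), K; split; [split|split].
- split; [split|split] => //.
  by rewrite sum_pair /=; under eq_bigr do rewrite f4; exact: nuXd.2.
- by move=> t x y; exact: (Kc (x, y)).
- move=> w; rewrite -f3; apply: eq_bigr => z _; rewrite /K.
  case: eqP => mz.
    rewrite mz mul0r; apply/eqP; rewrite eq_le pi0 /= -mz; exact: pile.
  by rewrite mulrC divfK //; apply/eqP.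
- by move: e6; rewrite /T6 => ->.
Qed.

Lemma main : d_OTC mX nuX mY nuY C = 0%E <-> d_OTM mX nuX mY nuY C p = 0%E.
Proof using hX sX hY sY C0 p0 p1.
split; [exact: otc_to_otm | exact: otm_to_otc].
Qed.

End Main.

Theorem proposition8 (R : realType) (X Y : finType)
  (mX : X -> X -> R) (nuX : X -> R) (mY : Y -> Y -> R) (nuY : Y -> R)
  (C : X -> Y -> R) (p : nat -> R) :
  markov_chain mX nuX -> is_stationary mX nuX ->
  markov_chain mY nuY -> is_stationary mY nuY ->
  (forall x y, 0 <= C x y) ->
  (forall t, 0 < p t) ->
  (\sum_(0 <= t <oo) (p t)%:E)%E = 1%E ->
  (d_OTC mX nuX mY nuY C = 0%E <-> d_OTM mX nuX mY nuY C p = 0%E).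
Proof.
move=> hX sX hY sY C0 p0 p1; exact: main.
Qed.
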